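(* In the setting described in the context: (a) if $S(i)=S(i+1)$ for every $i\in E$ (the signal is constant on each $A_i$), then $\sum_{z=0}^{N/2-1}|(W\lambda)(z)|^2\ge1-\frac{2M}{N}$; (b) if $S(i)\ne S(i+1)$ for every $i\in E$ (the signal is balanced on each $A_i$), then $\sum_{z=N/2}^{N-1}|(W\lambda)(z)|^2\ge1-\frac{2M}{N}$. The same two conclusions hold with $W$ replaced by $W_1$.
   Context: Let $N=2^n$, $n\ge1$, and $M\ge1$ with $2M<N$. Let $E\subset\{0,\dots,N-1\}$ be a set of $M$ even labels, $A_i=\{i,i+1\}$ for $i\in E$, and $A=\bigcup_{i\in E}A_i$ (so $|A|=2M$). Let $S:\{0,\dots,N-1\}\to\{0,1\}$ be arbitrary (its values outside $A$ are unrestricted). Let $\theta\in(0,\pi/2)$ with $\sin\theta=\sqrt{2M/N}$, $k=\lfloor\pi/(4\theta)\rfloor$, $a_k=\frac{\sin((2k+1)\theta)}{\sqrt{2M}}$, $b_k=\frac{\cos((2k+1)\theta)}{\sqrt{N-2M}}$, and $\lambda(z)=a_k(-1)^{S(z)}$ for $z\in A$, $\lambda(z)=b_k(-1)^{S(z)}$ for $z\notin A$. Haar wavelet transform: for $k=1,\dots,n$ let $m=n-k+1$ and let $H_k$ be the $2^m\times2^m$ matrix with, for $0\le j<2^{m-1}$, $(H_k)_{j,2j}=(H_k)_{j,2j+1}=\frac1{\sqrt2}$, $(H_k)_{2^{m-1}+j,2j}=\frac1{\sqrt2}$, $(H_k)_{2^{m-1}+j,2j+1}=-\frac1{\sqrt2}$,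 all other entries $0$; let $W_k=\begin{pmatrix}H_k&0\\0&I_{2^n-2^m}\end{pmatrix}$ and $W=W_nW_{n-1}\cdots W_1$. *)

(* Defs.v *)
From Stdlib Require Import Reals List Arith.
Import ListNotations.
Open Scope R_scope.

(* Vectors of length N = 2^n are functions nat -> R; only indices < N matter. *)

Fixpoint rsum (n : nat) (f : nat -> R) : R :=
  match n with
  | O => 0
  | S p => rsum p f + f p
  end.

(* Action of W_k = diag(H_k, I) where H_k is the 2^m x 2^m Haar block:
   rows j < 2^(m-1): (v(2j)+v(2j+1))/sqrt 2;
   rows 2^(m-1)+j:   (v(2j)-v(2j+1))/sqrt 2;
   rows >= 2^m: identity. *)
Definition haar_step (m : nat) (v : nat -> R) : nat -> R :=
  fun r =>
    if Nat.ltb r (2 ^ (m - 1)) then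
      (v (2 * r)%nat + v (2 * r + 1)%nat) / sqrt 2
    else if Nat.ltb r (2 ^ m) then
      (v (2 * (r - 2 ^ (m - 1)))%nat - v (2 * (r - 2 ^ (m - 1)) + 1)%nat) / sqrt 2
    else v r.

Definition Wk (n k : nat) (v : nat -> R) : nat -> R := haar_step (n - k + 1) v.

Fixpoint W_upto (n k : nat) (v : nat -> R) : nat -> R :=
  match k with
  | O => v
  | S p => Wk n (S p) (W_upto n p v)
  end.

Definition haarW (n : nat) (v : nat -> R) : nat -> R := W_upto n n v.

Definition inA (E : list nat) (z : nat) : bool :=
  existsb (fun i => orb (Nat.eqb z i) (Nat.eqb z (i + 1))) E.

(* (-1)^{S z} with S : nat -> bool encoding S : {0..N-1} -> {0,1} *)
Definition sgn (b : bool) : R := if b then -1 else 1.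

Definition kIter (theta : R) : nat := Z.to_nat (Int_part (PI / (4 * theta))).

Definition a_k (N M : nat) (theta : R) : R :=
  sin ((2 * INR (kIter theta) + 1) * theta) / sqrt (2 * INR M).
Definition b_k (N M : nat) (theta : R) : R :=
  cos ((2 * INR (kIter theta) + 1) * theta) / sqrt (INR N - 2 * INR M).

Definition lam (N M : nat) (E : list nat) (S : nat -> bool) (theta : R)
  : nat -> R :=
  fun z => (if inA E z then a_k N M theta else b_k N M theta) * sgn (S z).

Definition lowEnergy (N : nat) (v : nat -> R) : R :=
  rsum (N / 2) (fun z => (v z) ^ 2).
Definition highEnergy (N : nat) (v : nat -> R) : R :=
  rsum (N - N / 2) (fun z => (v (N / 2 + z)%nat) ^ 2).

(* Main.v *)
Require Import Defs.
From Stdlib Require Import Reals List Arith Lia Lra ZArith.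
Open Scope R_scope.

Lemma rsum_ext (p:nat) f g : (forall i, (i<p)%nat -> f i = g i) -> rsum p f = rsum p g.
Proof. induction p; cbn [rsum]; intros H; [reflexivity|].
  rewrite IHp by (intros; apply H; lia). rewrite H by lia. reflexivity. Qed.

Lemma rsum_plus p f g : rsum p (fun i => f i + g i) = rsum p f + rsum p g.
Proof. induction p; cbn [rsum]; [ring|]. rewrite IHp; ring. Qed.

Lemma rsum_add a b f : rsum (a+b) f = rsum a f + rsum b (fun i => f (a+i)%nat).
Proof. induction b; cbn [rsum].
  rewrite Nat.add_0_r; ring. rewrite Nat.add_succ_r; cbn [rsum]. rewrite IHb; ring. Qed.

Lemma rsum_pair p f : rsum (2*p) f = rsum p (fun j => f (2*j)%nat + f (2*j+1)%nat).
Proof. induction p. reflexivity.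
  replace (2 * S p)%nat with (S (S (2*p))) by lia. cbn [rsum]. rewrite IHp.
  replace (2*p+1)%nat with (S (2*p)) by lia. ring. Qed.

Lemma rsum_nonneg p f : (forall i, 0 <= f i) -> 0 <= rsum p f.
Proof. intros H; induction p; cbn [rsum]; [lra|]. specialize (H p); lra. Qed.

Lemma rsum_hole p f x : (x < p)%nat ->
  rsum p f = f x + rsum p (fun z => if Nat.eqb z x then 0 else f z).
Proof. induction p; intros H; [lia|]. cbn [rsum]. destruct (Nat.eq_dec x p).
 - subst. rewrite Nat.eqb_refl. rewrite (rsum_ext p (fun z => if Nat.eqb z p then 0 else f z) f). ring.
   intros i Hi. destruct (Nat.eqb_spec i p); [lia|auto].
 - rewrite IHp by lia. destruct (Nat.eqb_spec p x); [lia|]. ring. Qed.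

Definition lsum (L : list nat) (f : nat -> R) : R := fold_right (fun i acc => f i + acc) 0 L.

Lemma lsum_ext L f g : (forall i, In i L -> f i = g i) -> lsum L f = lsum L g.
Proof. induction L; simpl; intros H; auto. rewrite H by auto. rewrite IHL by auto. reflexivity. Qed.

Lemma lsum_const L c : lsum L (fun _ => c) = INR (length L) * c.
Proof. induction L; simpl length; [simpl; ring|]. rewrite S_INR. simpl. rewrite IHL. ring. Qed.

Lemma lsum_le_rsum p (L : list nat) (h : nat -> nat) : NoDup L ->
  (forall i j, In i L -> In j L -> h i = h j -> i = j) ->
  (forall i, In i L -> (h i < p)%nat) ->
  forall f, (forall z, 0 <= f z) -> lsum L (fun i => f (h i)) <= rsum p f.
Proof.
 induction L as [|a L IH]; intros ND Hinj Hlt f Hf; simpl.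
 - apply rsum_nonneg; auto.
 - inversion ND; subst. rewrite (rsum_hole p f (h a)) by (apply Hlt; left; auto).
   assert (E: lsum L (fun i => f (h i)) =
     lsum L (fun i => (fun z => if Nat.eqb z (h a) then 0 else f z) (h i))).
   { apply lsum_ext. intros i Hi. destruct (Nat.eqb_spec (h i) (h a)); auto.
     exfalso. assert (i = a) by (apply Hinj; simpl; auto). subst; contradiction. }
   rewrite E. apply Rplus_le_compat_l. apply (IH H2 ltac:(intros; apply Hinj; simpl; auto) ltac:(intros; apply Hlt; simpl; auto) (fun z => if Nat.eqb z (h a) then 0 else f z)).
   + intros z. destruct (Nat.eqb z (h a)); [lra|auto].
Qed.

Lemma sq_div_sqrt2 x : (x / sqrt 2) ^ 2 = x ^ 2 / 2.
Proof. assert (H := sqrt_sqrt 2 ltac:(lra)). assert (sqrt 2 <> 0) by (intro E; rewrite E in H; lra).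
  replace ((x / sqrt 2) ^ 2) with (x^2 / (sqrt 2 * sqrt 2)) by (field; auto). rewrite H. reflexivity. Qed.

Lemma haar_energy m v : (1 <= m)%nat ->
  rsum (2^m) (fun r => haar_step m v r ^ 2) = rsum (2^m) (fun r => v r ^ 2).
Proof.
  intros Hm. set (p := (2^(m-1))%nat).
  assert (Hp : (2^m = 2*p)%nat) by (unfold p; replace m with (S (m-1)) at 1 by lia; reflexivity).
  rewrite Hp. rewrite (rsum_pair p (fun r => v r ^ 2)). replace (2*p)%nat with (p+p)%nat by lia. rewrite (rsum_add p p (fun r => haar_step m v r ^ 2)).
  rewrite (rsum_ext p (fun r => haar_step m v r ^ 2) (fun r => (v (2*r)%nat + v (2*r+1)%nat)^2/2)).
  rewrite (rsum_ext p (fun i => haar_step m v (p+i) ^ 2) (fun r => (v (2*r)%nat - v (2*r+1)%nat)^2/2)).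
  rewrite <- rsum_plus. apply rsum_ext. intros; field.
  - intros i Hi. unfold haar_step. fold p. destruct (Nat.ltb_spec (p+i) p); [lia|].
    destruct (Nat.ltb_spec (p+i) (2^m)); [|lia]. replace (p+i-p)%nat with i by lia.
    apply sq_div_sqrt2.
  - intros i Hi. unfold haar_step. fold p. destruct (Nat.ltb_spec i p); [|lia].
    apply sq_div_sqrt2.
Qed.

Lemma W_upto_S n k v : W_upto n (S k) v = haar_step (n - S k + 1) (W_upto n k v).
Proof. reflexivity. Qed.

Lemma W_upto_high n k v r : (1 <= k <= n)%nat -> (2^(n-1) <= r)%nat ->
  W_upto n k v r = Wk n 1 v r.
Proof.
  induction k as [|k IH]; intros Hk Hr; [lia|].
  destruct (Nat.eq_dec k 0) as [->|Hk0]; [reflexivity|].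
  rewrite W_upto_S. unfold haar_step.
  assert (H1 : (2^(n - S k + 1) <= 2^(n-1))%nat) by (apply Nat.pow_le_mono_r; lia).
  assert (H2 : (2^(n - S k + 1 - 1) <= 2^(n - S k + 1))%nat) by (apply Nat.pow_le_mono_r; lia).
  destruct (Nat.ltb_spec r (2^(n - S k + 1 - 1))); [lia|].
  destruct (Nat.ltb_spec r (2^(n - S k + 1))); [lia|].
  apply IH; lia.
Qed.

Lemma W_upto_low n k v : (1 <= k <= n)%nat ->
  rsum (2^(n-1)) (fun r => W_upto n k v r ^ 2) = rsum (2^(n-1)) (fun r => Wk n 1 v r ^ 2).
Proof.
  induction k as [|k IH]; intros Hk; [lia|].
  destruct (Nat.eq_dec k 0) as [->|Hk0]; [reflexivity|].
  rewrite <- IH by lia.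
  set (m := (n - S k + 1)%nat). set (u := W_upto n k v).
  assert (H1 : (2^m <= 2^(n-1))%nat) by (apply Nat.pow_le_mono_r; unfold m; lia).
  assert (H2 : (2^(m - 1) <= 2^m)%nat) by (apply Nat.pow_le_mono_r; lia).
  replace (2^(n-1))%nat with (2^m + (2^(n-1) - 2^m))%nat by lia.
  rewrite W_upto_S. fold m. fold u.
  rewrite (rsum_add _ _ (fun r => haar_step m u r ^ 2)).
  rewrite (rsum_add _ _ (fun r => u r ^ 2)).
  rewrite haar_energy by (unfold m; lia). f_equal.
  apply rsum_ext. intros i Hi. unfold haar_step.
  destruct (Nat.ltb_spec (2^m + i) (2^(m - 1))); [lia|].
  destruct (Nat.ltb_spec (2^m + i) (2^m)); [lia|]. reflexivity.
Qed.
Lemma trig_bound theta : 0 < theta < PI/2 ->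
  sin ((2 * INR (kIter theta) + 1) * theta) ^ 2 >= cos theta ^ 2.
Proof.
  intros Ht. set (x := PI / (4*theta)).
  assert (Hx : 0 <= x) by (unfold x; apply Rle_mult_inv_pos; [pose proof PI_RGT_0; lra| lra]).
  destruct (base_Int_part x) as [B1 B2].
  assert (Hz : (0 <= Int_part x)%Z) by (assert (IZR (-1) < IZR (Int_part x)) by (simpl; lra); apply lt_IZR in H; lia).
  assert (Hk : INR (kIter theta) = IZR (Int_part x)).
  { unfold kIter. fold x. rewrite INR_IZR_INZ. rewrite Znat.Z2Nat.id by auto. reflexivity. }
  rewrite Hk. set (k := IZR (Int_part x)) in *.
  assert (Hpi : x * (4*theta) = PI) by (unfold x; field; lra).
  assert (A1 : 4*theta*k <= PI) by nra.
  assert (A2 : PI < 4*theta*k + 4*theta) by nra.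
  set (d := (2*k+1)*theta - PI/2).
  replace ((2*k+1)*theta) with (d + PI/2) by (unfold d; ring).
  rewrite sin_plus, sin_PI2, cos_PI2. replace (sin d * 0 + cos d * 1) with (cos d) by ring.
  assert (Hd : - theta <= d <= theta) by (unfold d; lra).
  assert (C : cos theta <= cos (Rabs d)).
  { apply (cos_decr_1 (Rabs d) theta); try lra; try apply Rabs_pos;
    pose proof PI_RGT_0; unfold Rabs; destruct (Rcase_abs d); lra. }
  assert (C2 : cos (Rabs d) = cos d) by (unfold Rabs; destruct (Rcase_abs d); [apply cos_neg|reflexivity]).
  assert (C0 : 0 <= cos theta) by (apply cos_ge_0; lra).
  rewrite <- C2. nra.
Qed.

Lemma Wk1_low n v j : (1 <= n)%nat -> (j < 2^(n-1))%nat ->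
  Wk n 1 v j = (v (2*j)%nat + v (2*j+1)%nat) / sqrt 2.
Proof. intros Hn Hj. unfold Wk, haar_step. replace (n-1+1)%nat with n by lia.
  destruct (Nat.ltb_spec j (2^(n-1))); [reflexivity|lia]. Qed.

Lemma Wk1_high n v j : (1 <= n)%nat -> (j < 2^(n-1))%nat ->
  Wk n 1 v (2^(n-1) + j) = (v (2*j)%nat - v (2*j+1)%nat) / sqrt 2.
Proof. intros Hn Hj. unfold Wk, haar_step. replace (n-1+1)%nat with n by lia.
  assert (Hp : (2^n = 2*2^(n-1))%nat) by (replace n with (S (n-1)) at 1 by lia; reflexivity).
  destruct (Nat.ltb_spec (2^(n-1)+j) (2^(n-1))); [lia|].
  destruct (Nat.ltb_spec (2^(n-1)+j) (2^n)); [|lia].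
  replace (2^(n-1)+j - 2^(n-1))%nat with j by lia. reflexivity. Qed.

Lemma sgn_sq b : sgn b ^ 2 = 1.
Proof. destruct b; simpl; ring. Qed.

Lemma pair_bound n (E : list nat) (g : nat -> R) c : (1 <= n)%nat -> NoDup E ->
  (forall i, In i E -> Nat.Even i /\ (i < 2^n)%nat) ->
  (forall i, In i E -> g (i/2)%nat ^ 2 = c) ->
  rsum (2^(n-1)) (fun z => g z ^ 2) >= INR (length E) * c.
Proof.
  intros Hn ND HE Hg. apply Rle_ge. rewrite <- lsum_const.
  rewrite (lsum_ext E (fun _ => c) (fun i => (fun z => g z ^ 2) (i/2)%nat)) by (intros; symmetry; auto).
  assert (Hp : (2^n = 2*2^(n-1))%nat) by (replace n with (S (n-1)) at 1 by lia; reflexivity).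
  refine (lsum_le_rsum (2^(n-1)) E (fun i => (i/2)%nat) ND _ _ (fun z => g z ^ 2) _).
  - intros i j Hi Hj Hij. destruct (HE i Hi) as [[a ->] _]. destruct (HE j Hj) as [[b ->] _].
    rewrite !(Nat.mul_comm 2), !Nat.div_mul in Hij by lia. lia.
  - intros i Hi. destruct (HE i Hi) as [[a ->] Hlt].
    rewrite (Nat.mul_comm 2), Nat.div_mul by lia. lia.
  - intros; apply pow2_ge_0.
Qed.

Theorem mainTheorem19
  (n M : nat) (E : list nat) (S : nat -> bool) (theta : R)
  (Hn : (1 <= n)%nat)
  (HM : (1 <= M)%nat)
  (HMN : (2 * M < 2 ^ n)%nat)
  (HEnodup : NoDup E)
  (HElen : length E = M)
  (HEeven : forall i, In i E -> Nat.Even i /\ (i < 2 ^ n)%nat)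
  (Htheta : 0 < theta < PI / 2)
  (Hsin : sin theta = sqrt (2 * INR M / INR (2 ^ n))) :
  let N := (2 ^ n)%nat in
  let l := lam N M E S theta in
  ((forall i, In i E -> S i = S (i + 1)%nat) ->
     lowEnergy N (haarW n l) >= 1 - 2 * INR M / INR N) /\
  ((forall i, In i E -> S i <> S (i + 1)%nat) ->
     highEnergy N (haarW n l) >= 1 - 2 * INR M / INR N) /\
  ((forall i, In i E -> S i = S (i + 1)%nat) ->
     lowEnergy N (Wk n 1 l) >= 1 - 2 * INR M / INR N) /\
  ((forall i, In i E -> S i <> S (i + 1)%nat) ->
     highEnergy N (Wk n 1 l) >= 1 - 2 * INR M / INR N).
Proof.
  intros N l.
  set (P := (2^(n-1))%nat).
  assert (Hp : (N = 2*P)%nat) by (unfold N, P; rewrite <- Nat.pow_succ_r'; f_equal; lia).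
  assert (HN2 : (N / 2 = P)%nat) by (rewrite Hp, Nat.mul_comm, Nat.div_mul; lia).
  assert (HN3 : (N - N / 2 = P)%nat) by lia.
  assert (HNpos : 0 < INR N) by (apply lt_0_INR; lia).
  assert (HMpos : 1 <= INR M) by (apply (le_INR 1); lia).
  set (y := (2 * INR (kIter theta) + 1) * theta).
  assert (Htarget : sin y ^ 2 >= 1 - 2 * INR M / INR N).
  { assert (T := trig_bound theta Htheta). fold y in T.
    assert (Hs2 : sin theta ^ 2 = 2 * INR M / INR N).
    { rewrite Hsin. simpl. rewrite Rmult_1_r. apply sqrt_sqrt.
      apply Rle_mult_inv_pos; lra. }
    assert (Hsc := sin2_cos2 theta). unfold Rsqr in Hsc. simpl in *. lra. }
  set (a := a_k N M theta).
  assert (Hsq : INR M * (2 * a ^ 2) = sin y ^ 2).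
  { unfold a, a_k. fold y.
    assert (H2M : sqrt (2 * INR M) * sqrt (2 * INR M) = 2 * INR M) by (apply sqrt_sqrt; lra).
    assert (sqrt (2 * INR M) <> 0) by (intro Z; rewrite Z in H2M; lra).
    replace ((sin y / sqrt (2 * INR M)) ^ 2) with (sin y ^ 2 / (sqrt (2 * INR M) * sqrt (2 * INR M)))
      by (field; auto).
    rewrite H2M. field. lra. }
  assert (HinA : forall i, In i E -> inA E i = true /\ inA E (i+1) = true).
  { intros i Hi. unfold inA. split; apply existsb_exists; exists i; split; auto;
    rewrite Nat.eqb_refl; auto using Bool.orb_true_r. }
  assert (Hval : forall i, In i E -> (i/2 < P)%nat /\ (2*(i/2) = i)%nat /\
      l (2*(i/2))%nat = a * sgn (S i) /\ l (2*(i/2)+1)%nat = a * sgn (S (i+1)%nat)).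
  { intros i Hi. destruct (HEeven i Hi) as [[j ->] Hlt].
    rewrite (Nat.mul_comm 2 j), Nat.div_mul by lia. rewrite (Nat.mul_comm j 2).
    destruct (HinA _ Hi) as [A1 A2]. unfold l, lam. rewrite A1, A2.
    repeat split; auto; lia. }
  assert (Low1 : (forall i, In i E -> S i = S (i + 1)%nat) ->
    rsum P (fun z => Wk n 1 l z ^ 2) >= sin y ^ 2).
  { intros Hs. rewrite <- Hsq, <- HElen. apply pair_bound; auto.
    intros i Hi. destruct (Hval i Hi) as (H1 & H2 & H3 & H4).
    rewrite Wk1_low by auto. rewrite H3, H4, <- Hs by auto. rewrite sq_div_sqrt2.
    replace ((a * sgn (S i) + a * sgn (S i)) ^ 2 / 2) with (2 * a^2 * sgn (S i) ^ 2) by field.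
    rewrite sgn_sq. ring. }
  assert (High1 : (forall i, In i E -> S i <> S (i + 1)%nat) ->
    rsum P (fun z => Wk n 1 l (P + z)%nat ^ 2) >= sin y ^ 2).
  { intros Hs. rewrite <- Hsq, <- HElen.
    apply (pair_bound n E (fun z => Wk n 1 l (P + z)%nat)); auto.
    intros i Hi. destruct (Hval i Hi) as (H1 & H2 & H3 & H4).
    unfold P. rewrite Wk1_high by auto. rewrite H3, H4. rewrite sq_div_sqrt2.
    specialize (Hs i Hi). destruct (S i), (S (i+1)%nat); try congruence; simpl; field. }
  unfold lowEnergy, highEnergy. rewrite HN3, HN2.
  split; [|split; [|split]]; intros Hs.
  - unfold haarW, P. rewrite W_upto_low by lia. fold P. specialize (Low1 Hs). lra.
  - rewrite (rsum_ext P _ (fun z => Wk n 1 l (P + z)%nat ^ 2)).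
    + specialize (High1 Hs). lra.
    + intros i Hi. unfold haarW. rewrite W_upto_high by (unfold P; lia). reflexivity.
  - specialize (Low1 Hs). lra.
  - specialize (High1 Hs). lra.
Qed.
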